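(* Let $V\subseteq\mathcal{V}$ be a set of interpretations. There is an ADF $D$ with $\mathrm{prf}(D)=V$ iff there is an adm-characterization for some $V'\subseteq\mathcal{V}$ with $V\subseteq V'$ and $\max_{\leq_i}(V')=V$, where $\max_{\leq_i}(V')$ denotes the set of $\leq_i$-maximal elements of $V'$.
   Context: Let $A$ be a fixed finite set of statements. An interpretation is a mapping $v:A\to\{\mathbf{t},\mathbf{f},\mathbf{u}\}$; $\mathcal{V}$ is the set of all interpretations and $\mathcal{V}_2$ the set of two-valued ones. The information ordering is $\mathbf{u}<_i\mathbf{t}$, $\mathbf{u}<_i\mathbf{f}$, extended pointwise. For $v\in\mathcal{V}$, $[v]_2$ is the set of two-valued interpretations $w$ with $v\leq_i w$. An ADF is $D=(A,L,C)$ where each statement $a$ has an acceptance formula $\varphi_a$ over its parents. The operator $\Gamma_D$ maps $v$ to the interpretation assigning to each $a$ the greatest lower bound w.r.t. $\leq_i$ (consensus: $\mathbf{t}$ if all are $\mathbf{t}$, $\mathbf{f}$ if all are $\mathbf{f}$, otherwise $\mathbf{u}$) of $\{w(\varphi_a)\mid w\in[v]_2\}$. $v$ is admissible iff $v\leq_i\Gamma_D(v)$; preferred iff it is $\leq_i$-maximal admissible; $\mathrm{prf}(D)$ is the set of preferred interpretations. A function $f:\mathcal{V}_2\to\mathcal{V}_2$ is an adm-characterization of a set $V'$ iff for each $v\in\mathcal{V}$: $v\in V'$ iff for every $a\in A$, $v(a)\neq\mathbf{u}$ implies $f(v_2)(a)=v(a)$ for all $v_2\in[v]_2$. (It is known that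 a set is the admissible semantics of some ADF iff it has an adm-characterization.) *)

(* Defs.v *)
From mathcomp Require Import all_boot.
Set Implicit Arguments. Unset Strict Implicit. Unset Printing Implicit Defensive.

Inductive tv := tv_t | tv_f | tv_u.

Section ADF.
Variable A : finType.

Definition interp := {ffun A -> tv}.
Definition interp2 := {ffun A -> bool}.

Definition tv_of_bool (b : bool) : tv := if b then tv_t else tv_f.

Definition info_le (v w : interp) : Prop :=
  forall a, v a = tv_u \/ v a = w a.

(* w \in [v]_2 : w two-valued with v <=_i w *)
Definition in_compl2 (v : interp) (w : interp2) : bool :=
  [forall a, match v a with tv_u => true | tv_t => w a | tv_f => ~~ w a end].

Inductive formula :=
| FAtom of A
| FTop
| FBot
| FNeg of formula
| FAnd of formula & formula
| FOr of formula & formula.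

Fixpoint feval (w : interp2) (phi : formula) : bool :=
  match phi with
  | FAtom a => w a
  | FTop => true
  | FBot => false
  | FNeg p => ~~ feval w p
  | FAnd p q => feval w p && feval w q
  | FOr p q => feval w p || feval w q
  end.

Fixpoint fvars (phi : formula) : seq A :=
  match phi with
  | FAtom a => [:: a]
  | FTop | FBot => [::]
  | FNeg p => fvars p
  | FAnd p q | FOr p q => fvars p ++ fvars q
  end.

Record ADF := MkADF {
  links : rel A;                         (* links b a : (b,a) \in L *)
  acc : A -> formula;
  acc_parents : forall a b, b \in fvars (acc a) -> links b a
}.

Definition Gamma (D : ADF) (v : interp) : interp :=
  [ffun a =>
     if [forall w, in_compl2 v w ==> feval w (acc D a)] then tv_t
     else if [forall w, in_compl2 v w ==> ~~ feval w (acc D a)] then tv_f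
     else tv_u].

Definition admissible (D : ADF) (v : interp) : Prop := info_le v (Gamma D v).

Definition preferred (D : ADF) (v : interp) : Prop :=
  admissible D v /\ forall v', admissible D v' -> info_le v v' -> v' = v.

Definition info_max (V' : interp -> Prop) (v : interp) : Prop :=
  V' v /\ forall v', V' v' -> info_le v v' -> v' = v.

Definition adm_characterization (V' : interp -> Prop) (f : interp2 -> interp2) : Prop :=
  forall v : interp,
    V' v <-> (forall a, v a <> tv_u ->
                forall w : interp2, in_compl2 v w -> tv_of_bool (f w a) = v a).

End ADF.

(* Main.v *)
Require Import Defs.
From mathcomp Require Import all_boot.

Section Aux.
Variable A : finType.

Definition minterm (w' : interp2 A) : formula A :=
  foldr (@FAnd A) (@FTop A)
    [seq (if w' b then FAtom b else FNeg (FAtom b)) | b <- enum A].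

Lemma minterm_eval w w' : feval w (minterm w') = (w == w').
Proof.
rewrite /minterm.
have -> : (w == w') = all (fun b => w b == w' b) (enum A).
  apply/eqP/allP => [-> b _ //|H]; apply/ffunP => b; apply/eqP; apply: H.
  by rewrite mem_enum.
elim: (enum A) => //= b s IH; rewrite IH.
by case: (w' b) => /=; case: (w b) => /=.
Qed.

Definition dnf (g : interp2 A -> bool) : formula A :=
  foldr (@FOr A) (@FBot A) [seq minterm w' | w' <- enum (interp2 A) & g w'].

Lemma dnf_eval g w : feval w (dnf g) = g w.
Proof.
rewrite /dnf.
have -> : g w = has (fun w' => w == w') [seq w' <- enum (interp2 A) | g w'].
  apply/idP/hasP => [gw|[w' ]]; first by exists w => //; rewrite mem_filter gw mem_enum.
  by rewrite mem_filter => /andP[gw' _] /eqP ->.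
elim: [seq _ <- _ | _] => //= w' s IH; by rewrite IH minterm_eval.
Qed.

Lemma compl_witness (v : interp A) : exists w, in_compl2 v w.
Proof.
exists [ffun b => if v b is tv_t then true else false]; apply/forallP => b; rewrite ffunE.
by case: (v b).
Qed.

Lemma adm_iff (D : ADF A) (v : interp A) :
  admissible D v <-> (forall a, v a <> tv_u ->
     forall w, in_compl2 v w -> tv_of_bool (feval w (acc D a)) = v a).
Proof.
rewrite /admissible /info_le /Gamma; split.
- move=> H a Hu w Hw; case: (H a) => [/Hu //|E]; rewrite E ffunE in Hu *.
  move: Hu; case: ifP => [/forallP/(_ w)|_]; first by rewrite Hw /= => ->.
  case: ifP => [/forallP/(_ w)|_]; last by [].
  by rewrite Hw /= => /negbTE ->.
- move=> H a; case Ha: (v a); [right|right|by left]; rewrite ffunE.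
  + have -> : [forall w, in_compl2 v w ==> feval w (acc D a)].
      apply/forallP => w; apply/implyP => Hw.
      by move: (H a); rewrite Ha => /(_ ltac:(discriminate) w Hw); case: feval.
    by [].
  + have [w0 Hw0] := compl_witness v.
    have -> : [forall w, in_compl2 v w ==> feval w (acc D a)] = false.
      apply/negbTE/negP => /forallP/(_ w0); rewrite Hw0 /=.
      by move: (H a); rewrite Ha => /(_ ltac:(discriminate) w0 Hw0); case: feval.
    have -> : [forall w, in_compl2 v w ==> ~~ feval w (acc D a)].
      apply/forallP => w; apply/implyP => Hw.
      by move: (H a); rewrite Ha => /(_ ltac:(discriminate) w Hw); case: feval.
    by [].
Qed.

End Aux.
Arguments dnf {A}.
Arguments adm_iff {A}.

Theorem corollary1 (A : finType) (V : interp A -> Prop) :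
  (exists D : ADF A, forall v : interp A, preferred D v <-> V v) <->
  (exists (V' : interp A -> Prop) (f : interp2 A -> interp2 A),
      adm_characterization V' f /\
      (forall v, V v -> V' v) /\
      (forall v, info_max V' v <-> V v)).
Proof.
split.
- move=> [D HD]; exists (admissible D), (fun w => [ffun a => feval w (acc D a)]).
  split; [|split].
  + move=> v; split => [/adm_iff H|H]; [|apply/adm_iff] => a Ha w Hw;
    by move: (H a Ha w Hw); rewrite ffunE.
  + by move=> v /HD [].
  + move=> v; exact: (HD v).
- move=> [V' [f [Hf [_ Hmax]]]].
  pose D := @MkADF A (fun _ _ => true) (fun a => dnf (fun w => f w a))
              (fun _ _ _ => isT).
  have HA : forall v, admissible D v <-> V' v.
    move=> v; apply: (iff_trans (adm_iff D v)); apply: iff_trans (iff_sym (Hf v)).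
    split => H a Ha w Hw; by move: (H a Ha w Hw); rewrite /= dnf_eval.
  exists D => v; apply: iff_trans (Hmax v); rewrite /preferred /info_max.
  split => [[/HA H1 H2]|[/HA H1 H2]]; split => // v' /HA; [exact: H2|exact: H2].
Qed.
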